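(* Let $\bar Q$ be a locally gentle bound quiver, let $F$ be a finite face of the non-kissing complex $\mathcal K_{nk}(\bar Q)$, let $\omega\in F$, and let $\alpha$ be an (occurrence of an) arrow on $\omega$. Assume $\omega$ is not an infinite straight walk. Then there is an arrow $\beta$ on $\omega$, traversed by $\omega$ in the same direction as $\alpha$ (i.e., with the same exponent $\pm1$ once an orientation of $\omega$ is fixed), such that $\omega$ marked at $\beta$ is maximal in $F_\beta$ for the countercurrent order $\prec_\beta$.
   Context: Locally gentle bound quiver $\bar Q=(Q,I)$: $Q$ finite, $I$ an ideal of $kQ$ generated by paths of length two ($kQ/I$ possibly infinite-dimensional), each vertex with at most two incoming and two outgoing arrows, and for each arrow $\beta$ at most one $\alpha$ with $t(\alpha)=s(\beta)$, $\alpha\beta\notin I$, at most one with $\alpha\beta\in I$, and symmetrically on the outgoing side. $\bar Q^{\mathrm{bl}}$ adds degree-one blossom vertices and arrows so each vertex of $Q_0$ has two incoming and two outgoing arrows, relations completed to stay locally gentle. A walk is a maximal (finite, or eventually cyclic ${}^\infty(c_1^{\varepsilon_1})\sigma(c_2^{\varepsilon_2})^\infty$) string of $\bar Q^{\mathrm{bl}}$, a string being a composable reduced word in arrows and formal inverses with no factor $\pi^{\pm1}$ for a path $\pi\in I$; $\omega\equiv\omega^{-1}$. A walk is straight if it or its inverse is a path; an infinite straight walk is one of the form ${}^\infty c^\infty=\cdots ccc\cdots$. A substring $\prod_{i'<\ell<j'}\alpha_\ell^{\varepsilon_\ell}$ of $\omega=\prod_{i<\ell<j}\alpha_\ell^{\varepsilon_\ell}$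 ($i\le i'<j'\le j$, strict at finite ends, with position) is on top if ($i'=-\infty$ or $\varepsilon_{i'}=-1$) and ($j'=\infty$ or $\varepsilon_{j'}=1$), at the bottom if ($i'=-\infty$ or $\varepsilon_{i'}=1$) and ($j'=\infty$ or $\varepsilon_{j'}=-1$). $\omega$ kisses $\omega'$ if a finite string is a top substring of $\omega$ and a bottom substring of $\omega'$. Faces of $\mathcal K_{nk}(\bar Q)$ are sets of pairwise non-kissing walks (none kissing itself). Marked walks and countercurrent order: a marked walk is a walk with a marked occurrence of an arrow $\alpha^{\pm1}$ (for infinite straight walks all markings at $\alpha$ are identified); $F_\alpha$ is the set of walks of $F$ marked at an occurrence of $\alpha^{\pm1}$. For distinct non-kissing $\mu_\star,\nu_\star$ marked at $\alpha$, with $\sigma$ their maximal common substring containing the marked occurrence, $\mu_\star\prec_\alpha\nu_\star$ if $\mu_\star$ enters and/or exits $\sigma$ in the direction pointed by $\alpha$ while $\nu_\star$ enters and/or exits $\sigma$ in the opposite direction. *)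

(* Defs.v *)
From Stdlib Require List.
From HB Require Import structures.
From mathcomp Require Import all_boot all_order all_algebra.
Set Implicit Arguments. Unset Strict Implicit. Unset Printing Implicit Defensive.
Import Order.TTheory GRing.Theory Num.Theory.
Local Open Scope ring_scope.

(* Bound quivers whose ideal is generated by paths of length two.       *)
(* [qrel a b] means that the path "a b" (first a, then b, so            *)
(* qtgt a = qsrc b) belongs to the ideal I.                             *)
Record bquiver := BQuiver {
  qvert : finType;
  qarr  : finType;
  qsrc  : qarr -> qvert;
  qtgt  : qarr -> qvert;
  qrel  : qarr -> qarr -> bool }.

Definition locally_gentle (Q : bquiver) : Prop :=
  [/\ (forall a b : qarr Q, qrel a b -> qtgt a = qsrc b),
      (forall v : qvert Q, #|[pred a : qarr Q | qtgt a == v]| <= 2)%N,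
      (forall v : qvert Q, #|[pred a : qarr Q | qsrc a == v]| <= 2)%N,
      (forall b : qarr Q,
         (#|[pred a : qarr Q | (qtgt a == qsrc b) && ~~ qrel a b]| <= 1)%N /\
         (#|[pred a : qarr Q | (qtgt a == qsrc b) && qrel a b]| <= 1)%N) &
      (forall a : qarr Q,
         (#|[pred b : qarr Q | (qtgt a == qsrc b) && ~~ qrel a b]| <= 1)%N /\
         (#|[pred b : qarr Q | (qtgt a == qsrc b) && qrel a b]| <= 1)%N)].

Definition indeg (Q : bquiver) (v : qvert Q) : nat := #|[pred a : qarr Q | qtgt a == v]|.
Definition outdeg (Q : bquiver) (v : qvert Q) : nat := #|[pred a : qarr Q | qsrc a == v]|.

Definition is_blossoming (Q Qbl : bquiver)
    (iv : qvert Q -> qvert Qbl) (ia : qarr Q -> qarr Qbl) : Prop :=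
  [/\ injective iv /\ injective ia,
      (forall a, qsrc (ia a) = iv (qsrc a) /\ qtgt (ia a) = iv (qtgt a)),
      (forall a b, qrel (ia a) (ia b) = qrel a b),
      (forall v, indeg (iv v) = 2%N /\ outdeg (iv v) = 2%N) &
      [/\ (forall w, w \notin codom iv -> (indeg w + outdeg w = 1)%N),
          (forall a', a' \notin codom ia ->
             (qsrc a' \notin codom iv) || (qtgt a' \notin codom iv)),
          (forall a', (qsrc a' \in codom iv) || (qtgt a' \in codom iv)) &
          locally_gentle Qbl]].

(* A letter is (a, true) for the arrow a and (a, false) for a^{-1}.     *)
Section Walks.
Variable Q : bquiver.

Definition letter := (qarr Q * bool)%type.
Definition lsrc (x : letter) : qvert Q := if x.2 then qsrc x.1 else qtgt x.1.
Definition ltgt (x : letter) : qvert Q := if x.2 then qtgt x.1 else qsrc x.1.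
Definition lflip (x : letter) : letter := (x.1, ~~ x.2).

Definition composable (x y : letter) : bool :=
  [&& ltgt x == lsrc y,
      ~~ ((x.1 == y.1) && (x.2 != y.2)),
      ~~ [&& x.2, y.2 & qrel x.1 y.1] &
      ~~ [&& ~~ x.2, ~~ y.2 & qrel y.1 x.1]].

(* A (possibly infinite) word  prod_{lo < l < hi} wlet l,
   with lo = None meaning -oo and hi = None meaning +oo. *)
Record word := Word { wlo : option int; whi : option int; wlet : int -> letter }.

Definition in_dom (w : word) (l : int) : bool :=
  (if wlo w is Some i then i < l else true) &&
  (if whi w is Some j then l < j else true).

Definition is_string (w : word) : Prop :=
  (exists l, in_dom w l) /\
  (forall l, in_dom w l -> in_dom w (l + 1) -> composable (wlet w l) (wlet w (l + 1))).

(* eventually cyclic along an oriented cycle traversed in a fixed direction *)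
Definition left_cyclic (w : word) : Prop :=
  exists (N : int) (p : int), 0 < p /\
    forall l, l <= N -> wlet w (l - p) = wlet w l /\ (wlet w l).2 = (wlet w N).2.
Definition right_cyclic (w : word) : Prop :=
  exists (N : int) (p : int), 0 < p /\
    forall l, N <= l -> wlet w (l + p) = wlet w l /\ (wlet w l).2 = (wlet w N).2.

Definition is_walk (w : word) : Prop :=
  [/\ is_string w,
      (match wlo w with
       | Some i => forall x : letter, ~~ composable x (wlet w (i + 1))
       | None => left_cyclic w end) &
      (match whi w with
       | Some j => forall y : letter, ~~ composable (wlet w (j - 1)) y
       | None => right_cyclic w end)].

Definition is_inf_straight (w : word) : Prop :=
  wlo w = None /\ whi w = None /\ forall l, (wlet w l).2 = (wlet w 0).2.

Definition rev_word (w : word) : word :=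
  Word (omap (fun x => - x) (whi w)) (omap (fun x => - x) (wlo w))
       (fun l => lflip (wlet w (- l))).

(* substring strictly between positions i < j (both letters at i and j exist) *)
Definition top_sub (w : word) (i j : int) : Prop :=
  [/\ i < j, in_dom w i, in_dom w j, (wlet w i).2 = false & (wlet w j).2 = true].
Definition bottom_sub (w : word) (i j : int) : Prop :=
  [/\ i < j, in_dom w i, in_dom w j, (wlet w i).2 = true & (wlet w j).2 = false].

(* the substring of w strictly between i and j equals the substring of w'
   strictly between k and l (as strings, including their start vertex) *)
Definition same_sub (w : word) (i j : int) (w' : word) (k l : int) : Prop :=
  [/\ j - i = l - k, ltgt (wlet w i) = ltgt (wlet w' k) &
      forall d, 0 < d -> d < j - i -> wlet w (i + d) = wlet w' (k + d)].

Definition kiss0 (w w' : word) : Prop :=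
  exists i j k l, [/\ top_sub w i j, bottom_sub w' k l & same_sub w i j w' k l].

(* w kisses w' (walks are considered up to inversion) *)
Definition kisses (w w' : word) : Prop := kiss0 w w' \/ kiss0 w (rev_word w').

Definition is_nk_face (F : seq word) : Prop :=
  (forall w, List.In w F -> is_walk w) /\
  (forall w w', List.In w F -> List.In w' F -> ~ kisses w w').

(* Marked walks.  The view of w marked at position q is the word read   *)
(* from the marked letter, oriented so that the marked letter is direct;*)
(* view d = letter at offset d (None outside the walk).  Two marked     *)
(* walks are equal iff their views coincide (this identifies walks up   *)
(* to shift and inversion, hence identifies all markings at a given     *)
(* arrow of an infinite straight walk).                                 *)
Definition view (w : word) (q : int) : int -> option letter :=
  if (wlet w q).2 then
    fun d => if in_dom w (q + d) then Some (wlet w (q + d)) else None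
  else
    fun d => if in_dom w (q - d) then Some (lflip (wlet w (q - d))) else None.

Definition same_marked (f g : int -> option letter) : Prop := forall d, f d = g d.

(* f exits the maximal common substring sigma (with g, containing offset 0)
   with a letter of exponent b *)
Definition exits_dir (f g : int -> option letter) (b : bool) : Prop :=
  exists r : int, [/\ 0 <= r,
    (forall e, 0 <= e -> e <= r -> f e = g e /\ f e <> None),
    f (r + 1) <> g (r + 1) &
    exists x, f (r + 1) = Some (x, b)].

(* f enters sigma with a letter of exponent b *)
Definition enters_dir (f g : int -> option letter) (b : bool) : Prop :=
  exists k : int, [/\ 0 <= k,
    (forall e, - k <= e -> e <= 0 -> f e = g e /\ f e <> None),
    f (- k - 1) <> g (- k - 1) &
    exists x, f (- k - 1) = Some (x, b)].

(* countercurrent order: mu < nu iff mu enters and/or exits sigma in the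
   direction pointed by the marked arrow, while nu enters and/or exits
   sigma in the opposite direction *)
Definition countercurrent_lt (f g : int -> option letter) : Prop :=
  (enters_dir f g true \/ exits_dir f g true) /\
  (enters_dir g f false \/ exits_dir g f false).

Definition maximal_in_Fbeta (F : seq word) (w : word) (q : int) : Prop :=
  forall nu, List.In nu F -> forall q', in_dom nu q' ->
    (wlet nu q').1 = (wlet w q).1 ->
    ~ same_marked (view w q) (view nu q') ->
    ~ countercurrent_lt (view w q) (view nu q').

End Walks.

(* Main.v *)
Require Import Defs.
From HB Require Import structures.
From mathcomp Require Import all_boot all_order all_algebra.
From mathcomp Require Import zify.
From Stdlib Require Import Classical.
Set Implicit Arguments. Unset Strict Implicit. Unset Printing Implicit Defensive.
Import Order.TTheory GRing.Theory Num.Theory.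
Local Open Scope ring_scope.

Section Core.
Variable Q : bquiver.
Definition sq := int -> option (letter Q).
Definition odir (o : option (letter Q)) : option bool := omap snd o.
Definition isd (o : option (letter Q)) (b : bool) : bool := odir o == Some b.

Lemma isdP o b : isd o b -> exists x, o = Some x /\ x.2 = b.
Proof. by case: o => [x|] //= /eqP [<-]; exists x. Qed.

Lemma isd_TF o : isd o true -> isd o false -> False.
Proof. by rewrite /isd => /eqP ->. Qed.

Definition ltO (L : option int) (e : int) : bool := if L is Some l then l < e else true.
Definition ltO' (e : int) (R : option int) : bool := if R is Some r then e < r else true.

Definition Cross (h g : sq) (L R : option int) : Prop :=
  [/\ forall e, ltO L e -> ltO' e R -> h e = g e,
      (if L is Some l then isd (h l) true /\ isd (g l) false else True),
      (if R is Some r then isd (h r) true /\ isd (g r) false else True) &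
      ~ (L = None /\ R = None)].

Definition KissA (s t : sq) : Prop :=
  exists a b, [/\ a < b, isd (s a) false, isd (s b) true, isd (t a) true & isd (t b) false] /\
    (forall e, a < e -> e < b -> s e = t e) /\
    (omap (@ltgt Q) (s a) = omap (@ltgt Q) (t a) /\ omap (@lsrc Q) (s b) = omap (@lsrc Q) (t b)).

Definition convex (s : sq) := forall a b e, a <= e -> e <= b -> s a <> None -> s b <> None -> s e <> None.
Definition chain (s : sq) := forall e x y, s e = Some x -> s (e + 1) = Some y -> composable x y.

Lemma Cross_ext h g g' L R : (forall e, g e = g' e) -> Cross h g L R -> Cross h g' L R.
Proof.
move=> E [H1 H2 H3 H4]; split => //.
- by move=> e a b; rewrite -E; apply: H1.
- by case: L H2 {H1 H4} => // l; rewrite E.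
- by case: R H3 {H1 H4} => // l; rewrite E.
Qed.

Section Abstract.
Variable G : sq -> Prop.
Hypothesis Gch : forall g, G g -> chain g.
Hypothesis nok : forall s t, G s -> G t -> ~ KissA s t.
Variable h : sq.
Hypothesis Gh : G h.
Hypothesis hcv : convex h.

Lemma noncross g1 g2 L1 r1 l2 R2 : G g1 -> G g2 ->
  Cross h g1 L1 (Some r1) -> Cross h g2 (Some l2) R2 ->
  ltO L1 l2 -> l2 < r1 -> ltO' r1 R2 -> False.
Proof.
move=> G1 G2 [A1 _ [B1 C1] _] [A2 [B2 C2] _ _] H1 H2 H3.
apply: (nok G2 G1); exists l2, r1.
have e1 : forall e, l2 < e -> e < r1 -> g2 e = g1 e.
  move=> e le re; rewrite -A2 //=; last by case: R2 H3 {A2} => //= r; lia.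
  rewrite A1 //=; case: L1 H1 {A1} => //= l; lia.
have hr1 : h r1 = g2 r1 by rewrite A2 //=.
have hl2 : h l2 = g1 l2 by rewrite A1.
have hS : forall e, l2 <= e -> e <= r1 -> h e <> None.
  move=> e a b; apply: (hcv a b).
  - by case/isdP: B2 => x [-> _].
  - by case/isdP: B1 => x [-> _].
split; [split => //; [by rewrite -hr1 | by rewrite -hl2] | split; first by move=> e a b; apply: e1].
split.
- have E1 : g2 (l2 + 1) = h (l2 + 1).
    have [lt|eq] : l2 + 1 < r1 \/ l2 + 1 = r1 by lia.
    + by rewrite -A2 //=; [lia| case: R2 H3 {A2} => //= r; lia].
    + by rewrite eq hr1.
  have : h (l2 + 1) <> None by apply: hS; lia.
  case E : (h (l2 + 1)) => [z|] // _.
  case/isdP: C2 => x [gx _]; rewrite -hl2; case/isdP: B2 => y [hy _].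
  rewrite gx hy /=; congr Some.
  have c1 := Gch G2 gx (etrans E1 E); have c2 := Gch Gh hy E.
  by move: c1 c2; rewrite /composable => /and4P [/eqP -> _ _ _] /and4P [/eqP -> _ _ _].
- have E0 : g1 (r1 - 1) = h (r1 - 1).
    have [lt|eq] : l2 < r1 - 1 \/ l2 = r1 - 1 by lia.
    + by rewrite -A1 //=; [case: L1 H1 {A1} => //= l; lia| lia].
    + by rewrite -eq hl2.
  have : h (r1 - 1) <> None by apply: hS; lia.
  case E : (h (r1 - 1)) => [z|] // _.
  case/isdP: C1 => x [gx _]; rewrite -hr1; case/isdP: B1 => y [hy _].
  rewrite gx hy /=; congr Some.
  have E' : r1 - 1 + 1 = r1 by rewrite subrK.
  have c1 := Gch G1 (etrans E0 E) (etrans (f_equal g1 E') gx).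
  have c2 := Gch Gh E (etrans (f_equal h E') hy).
  by move: c1 c2; rewrite /composable => /and4P [/eqP <- _ _ _] /and4P [/eqP <- _ _ _].
Qed.


Hypothesis cover : forall d, isd (h d) true ->
  exists g L R, [/\ G g, Cross h g L R, ltO L d & ltO' d R].
Hypothesis bndR : exists M, forall g L r, G g -> Cross h g L (Some r) -> ltO L 0 -> r < M.
Hypothesis bndL : exists M, forall g l R, G g -> Cross h g (Some l) R -> ltO' 0 R -> - M < l.
Hypothesis h0 : isd (h 0) true.

Lemma step_R g L r : G g -> Cross h g L (Some r) -> ltO L 0 ->
  exists g' L' R', [/\ G g', Cross h g' L' R', ltO L' 0 & ltO' r R'].
Proof.
move=> Gg C L0; have [_ _ [hr _] _] := C.
have [g' [L' [R' [Gg' C' l1 r1]]]] := cover hr.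
exists g', L', R'; split => //.
case: L' C' l1 => // l' C' /= l1.
case E : (ltO L l'); first by case: (noncross Gg Gg' C C' E l1 r1).
by case: L L0 E {C} => //= l; lia.
Qed.

Lemma step_L g l : G g -> Cross h g (Some l) None ->
  exists g' l', [/\ G g', Cross h g' (Some l') None & l' < l].
Proof.
move=> Gg C; have [_ [hl _] _ _] := C.
have [g' [L' [R' [Gg' C' l1 r1]]]] := cover hl.
case: R' C' r1 => [r'|] C' r1.
  by case: (noncross Gg' Gg C' C l1 r1 isT).
case: L' C' l1 => [l'|] C' l1; last by case: C' => _ _ _ [].
by exists g', l'.
Qed.

Lemma core : False.
Proof.
have P1 : forall n : nat, (exists g L, [/\ G g, Cross h g L None & ltO L 0]) \/
   (exists g L r, [/\ G g, Cross h g L (Some r), ltO L 0 & n%:Z <= r]).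
  elim => [|n [IH|[g [L [r [Gg C L0 nr]]]]]].
  - have [g [L [R [Gg C L0 R0]]]] := cover h0.
    case: R C R0 => [r|] C R0; last by left; exists g, L.
    by right; exists g, L, r; split => //=; move: R0 => /=; lia.
  - by left.
  - have [g' [L' [R' [Gg' C' L1 R1]]]] := step_R Gg C L0.
    case: R' C' R1 => [r'|] C' R1; last by left; exists g', L'.
    by right; exists g', L', r'; split => //; move: R1 => /=; lia.
have [M HM] := bndR.
have [[g [L [Gg C L0]]]|[g [L [r [Gg C L0 nr]]]]] := P1 `|M|%N; last first.
  by have := HM _ _ _ Gg C L0; lia.
case: L C L0 => [l|] C L0; last by case: C => _ _ _ [].
have P2 : forall n : nat, exists g l', [/\ G g, Cross h g (Some l') None & l' <= - n%:Z].
  elim => [|n [g1 [l1 [G1 C1 l1n]]]].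
  - by exists g, l; split => //; move: L0 => /=; lia.
  - have [g' [l' [G' C' lt]]] := step_L G1 C1.
    by exists g', l'; split => //; lia.
have [M' HM'] := bndL.
have [g1 [l1 [G1 C1 l1n]]] := P2 `|M'|%N.
by have := HM' _ _ _ G1 C1 isT; lia.
Qed.

End Abstract.
End Core.



Section Bound.
Variable Q : bquiver.
Notation sq := (sq Q).

Definition rtail (s : sq) : Prop :=
  (exists M, forall e, M <= e -> s e = None) \/
  (exists N, forall e, N <= e -> s e <> None /\ odir (s e) = odir (s N)).
Definition ltail (s : sq) : Prop := rtail (fun e => s (- e)).
Definition tailed (s : sq) : Prop := rtail s /\ ltail s.
Definition shift (c : int) (s : sq) : sq := fun e => s (c + e).

Lemma isd_odir (o : option (letter Q)) b : isd o b = (odir o == Some b). Proof. by []. Qed.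

Lemma bound_right (h s : sq) : tailed h -> tailed s -> (exists e, ~~ isd (h e) true) ->
  exists M, forall c L r, Cross h (shift c s) L (Some r) -> ltO L 0 -> r < M.
Proof.
move=> [hR _] [sR sL] [e0 ne0].
case: hR => [[M HM]|[N HN]].
  exists M => c L r [_ _ [hr _] _] _; rewrite ltNge; apply/negP => Mr.
  by move: hr; rewrite HM.
case Nd : (odir (h N) == Some true); last first.
  exists N => c L r [_ _ [hr _] _] _; rewrite ltNge; apply/negP => Nr.
  by move: hr; rewrite /isd (HN _ Nr).2 Nd.
move/eqP: Nd => Nd.
have [N' [N'1 N'2 HN']] : exists N', [/\ N <= N', 0 <= N' &
    forall e, N' <= e -> h e <> None /\ odir (h e) = Some true].
  exists (Num.max N 0); split; try lia.
  by move=> e le; rewrite -Nd; apply: HN; lia.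
have [B HB] : exists B, forall x, isd (s x) true -> isd (s (x + 1)) false -> x < B.
  case: sR => [[m Hm]|[N3 H3]].
  - exists m => x _ /isdP [y [sy _]]; rewrite ltNge; apply/negP => mx.
    by have := Hm (x + 1) ltac:(lia); rewrite sy.
  - exists N3 => x a b; rewrite ltNge; apply/negP => Nx.
    move: a b; rewrite /isd (H3 _ Nx).2 (H3 (x + 1) ltac:(lia)).2.
    by move/eqP => ->.
have keyN : forall c L r, Cross h (shift c s) L (Some r) -> ltO L 0 -> N' + 1 <= r ->
   [/\ c + (r - 1) < B, isd (s (c + N')) true & forall e, ltO L e -> e < r -> h e = s (c + e)].
  move=> c L r [A _ [_ gr] _] L0 Nr.
  have hE : forall e, ltO L e -> e < r -> h e = s (c + e) by move=> e a b; apply: A.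
  split => //; last first.
    rewrite -hE; [by rewrite isd_odir (HN' N' (lexx _)).2 | by case: L L0 {A hE} => //= l; lia|lia].
  apply: HB.
    rewrite -hE; [by rewrite isd_odir (HN' (r - 1) ltac:(lia)).2|by case: L L0 {A hE} => //= l; lia|lia].
  by rewrite -addrA subrK.
case: sL => [[m Hm]|[N2 H2]].
- exists (Num.max (N' + 1) (B + m + N' + 2)) => c L r C L0.
  rewrite ltNge; apply/negP => Mr.
  have [k1 /isdP [y [sy _]] _] := keyN c L r C L0 ltac:(lia).
  have : c + N' > - m.
    rewrite ltNge; apply/negP => cm; move: sy; rewrite -(opprK (c + N')) Hm //; lia.
  lia.
- exists (Num.max (N' + 1) (B + N2 + N' + 2)) => c L r C L0.
  rewrite ltNge; apply/negP => Mr.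
  have [k1 k2 k3] := keyN c L r C L0 ltac:(lia).
  have [cN|cN] : c + N' <= - N2 \/ - N2 < c + N' by lia.
  + have Hl : forall y, y <= c + N' -> isd (s y) true.
      have Hc : forall y, y <= - N2 -> odir (s y) = odir (s (- N2)).
        by move=> y yl; have := (H2 (- y) ltac:(lia)).2; rewrite opprK.
      move=> y yl; have yl' : y <= - N2 by lia.
      by rewrite isd_odir (Hc y yl') -(Hc (c + N') cN).
    case: L C L0 k3 => [l|] C L0 k3.
    * case: C => _ [_ gl] _ _; apply: (isd_TF _ gl); apply: Hl; move: L0 => /=; lia.
    * move/negP: ne0; apply; have [le|lt] : e0 < N' \/ N' <= e0 by lia.
      - rewrite k3 //; first (apply: Hl; lia); lia.
      - by rewrite isd_odir (HN' e0 lt).2.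
  + lia.
Qed.


Definition mirror (s : sq) : sq := fun e => s (- e).

Lemma rtail_ext (s t : sq) : (forall e, s e = t e) -> rtail s -> rtail t.
Proof.
move=> E [[M HM]|[N HN]]; [left; exists M => e le; rewrite -E; exact: HM|].
by right; exists N => e le; rewrite -!E; apply: HN.
Qed.

Lemma tailed_mirror s : tailed s -> tailed (mirror s).
Proof.
case=> R L; split => //; apply: rtail_ext R => e; by rewrite /mirror opprK.
Qed.

Lemma Cross_mirror h g L R : Cross h g L R ->
  Cross (mirror h) (mirror g) (omap (fun x => - x) R) (omap (fun x => - x) L).
Proof.
case=> A BL BR nn; split.
- move=> e a b; apply: A.
  + by move: b; case: (L) => //= l; lia.
  + by move: a; case: (R) => //= r; lia.
- by move: BR; case: (R) => //= r; rewrite /mirror opprK.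
- by move: BL; case: (L) => //= l; rewrite /mirror opprK.
- by move: nn; case: (L) => [l|]; case: (R) => [r|] //= nn [].
Qed.

Lemma bound_left (h s : sq) : tailed h -> tailed s -> (exists e, ~~ isd (h e) true) ->
  exists M, forall c l R, Cross h (shift c s) (Some l) R -> ltO' 0 R -> - M < l.
Proof.
move=> th ts [e0 ne0].
have ne0' : exists e, ~~ isd (mirror h e) true by exists (- e0); rewrite /mirror opprK.
have [M HM] := bound_right (tailed_mirror th) (tailed_mirror ts) ne0'.
exists M => c l R C R0.
have C' := Cross_ext (g' := shift (- c) (mirror s)) _ (Cross_mirror C).
have := HM (- c) (omap (fun x => - x) R) (- l) (C' _) _.
have -> : - l < M = (- M < l) by apply/idP/idP; lia.
apply.
- by move=> e; rewrite /mirror /shift; congr s; lia.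
- by case: R R0 {C C'} => //= r; lia.
Qed.

End Bound.



Section Gentle.
Variable Q : bquiver.

Lemma composable_flip (x y : letter Q) : composable x y -> composable (lflip y) (lflip x).
Proof.
case: x y => [a b] [c d]; rewrite /composable /lflip /ltgt /lsrc /= => /and4P [e1 e2 e3 e4].
apply/and4P; split.
- by move: e1; case: (b); case: (d) => /=; rewrite eq_sym.
- by rewrite eq_sym (eq_sym (~~ d)) (inj_eq negb_inj).
- by rewrite ?negbK; move: e4; case: (b); case: (d).
- by rewrite ?negbK; move: e3; case: (b); case: (d).
Qed.

Lemma lflipK : involutive (@lflip Q).
Proof. by case=> a b; rewrite /lflip /= negbK. Qed.

Hypothesis LG : locally_gentle Q.

Lemma card_le1_eq (A : {pred qarr Q}) x y : (#|A| <= 1)%N -> x \in A -> y \in A -> x = y.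
Proof. by move/card_le1P => H xA yA; have := H x xA y; rewrite yA inE => /esym/eqP. Qed.

Lemma card_le2_eq (A : {pred qarr Q}) x y z : (#|A| <= 2)%N -> x \in A -> y \in A -> z \in A ->
  x != y -> z != y -> x = z.
Proof.
move=> c xA yA zA xy zy; apply/eqP; apply: contraTT c => xz; rewrite -ltnNge.
by apply/card_gt2P; exists x, y, z; split; split => //; rewrite eq_sym.
Qed.

Lemma uniq_succ (x y1 y2 : letter Q) : composable x y1 -> composable x y2 -> y1.2 = y2.2 -> y1 = y2.
Proof.
case: LG => _ Hin Hout Hb Ha.
case: x y1 y2 => [a b] [c1 d1] [c2 d2]; rewrite /composable /ltgt /lsrc /= => + + E; subst d2.
move=> /and4P [e1 n1 r1 s1] /and4P [e2 n2 r2 s2]; congr pair.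
move: e1 n1 r1 s1 e2 n2 r2 s2; case: b; case: d1; rewrite /= ?andbT ?andbF.
- move=> /eqP e1 _ r1 _ /eqP e2 _ r2 _.
  move: r1 r2; rewrite ?andbT => r1 r2.
  by apply: (card_le1_eq (Ha a).1); rewrite inE -?e1 -?e2 ?eqxx ?r1 ?r2.
- move=> /eqP e1 n1 _ _ /eqP e2 n2 _ _.
  by apply: (card_le2_eq (Hin (qtgt a)) (y := a)); rewrite ?inE -?e1 -?e2 ?eqxx // eq_sym.
- move=> /eqP e1 n1 _ _ /eqP e2 n2 _ _.
  by apply: (card_le2_eq (Hout (qsrc a)) (y := a)); rewrite ?inE -?e1 -?e2 ?eqxx // eq_sym.
- move=> /eqP e1 _ _ r1 /eqP e2 _ _ r2.
  by apply: (card_le1_eq (Hb a).1); rewrite inE -?e1 -?e2 eqxx ?r1 ?r2.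
Qed.

Lemma uniq_pred (x1 x2 y : letter Q) : composable x1 y -> composable x2 y -> x1.2 = x2.2 -> x1 = x2.
Proof.
move=> /composable_flip c1 /composable_flip c2 E.
apply: (can_inj lflipK); apply: uniq_succ c1 c2 _; by rewrite /lflip /= E.
Qed.

End Gentle.



Section Seqs.
Variable Q : bquiver.
Notation sq := (sq Q).

Definition endR (s : sq) := forall e x y, s e = Some x -> s (e + 1) = None -> ~~ composable x y.
Definition endL (s : sq) := forall e x y, s e = None -> s (e + 1) = Some y -> ~~ composable x y.
Definition wseq (s : sq) := [/\ convex s, chain s, endR s & endL s].
Definition refl (s : sq) : sq := fun y => omap (@lflip Q) (s (- y)).

Lemma wseq_ext (s t : sq) : (forall e, s e = t e) -> wseq s -> wseq t.
Proof.
move=> E [cv ch eR eL]; split.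
- by move=> a b e; rewrite -!E; apply: cv.
- by move=> e x y; rewrite -!E; apply: ch.
- by move=> e x y; rewrite -!E; apply: eR.
- by move=> e x y; rewrite -!E; apply: eL.
Qed.

Lemma wseq_shift c (s : sq) : wseq s -> wseq (shift c s).
Proof.
move=> [cv ch eR eL]; rewrite /shift; split.
- by move=> a b e ae eb; apply: cv; lia.
- by move=> e x y; rewrite addrA; apply: ch.
- by move=> e x y; rewrite addrA; apply: eR.
- by move=> e x y; rewrite addrA; apply: eL.
Qed.

Lemma wseq_refl (s : sq) : wseq s -> wseq (refl s).
Proof.
move=> [cv ch eR eL]; rewrite /refl; split.
- move=> a b e ae eb h1 h2.
  have : s (- e) <> None.
    apply: (cv (- b) (- a)); [lia|lia| by case: (s (- b)) h2 | by case: (s (- a)) h1].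
  by case: (s (- e)).
- move=> e x y; case E1: (s (- e)) => [x'|] //= [<-]; case E2: (s (- (e + 1))) => [y'|] //= [<-].
  apply: composable_flip; apply: ch E2 _; by rewrite opprD subrK.
- move=> e x y; case E1: (s (- e)) => [x'|] //= [<-]; case E2: (s (- (e + 1))) => [y'|] //= _.
  apply/negP => /composable_flip; rewrite lflipK; apply/negP; apply: eL E2 _.
  by rewrite opprD subrK.
- move=> e x y; case E1: (s (- e)) => [x'|] //= _; case E2: (s (- (e + 1))) => [y'|] //= [<-].
  apply/negP => /composable_flip; rewrite lflipK; apply/negP; apply: eR E2 _.
  by rewrite opprD subrK.
Qed.

Lemma rtail_shift c (s : sq) : rtail s -> rtail (shift c s).
Proof.
rewrite /shift => [[[M HM]|[N HN]]]; [left; exists (M - c) => e le; apply: HM; lia|].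
right; exists (N - c) => e le; have -> : c + (N - c) = N by lia.
apply: HN; lia.
Qed.

Lemma rtail_flip (s : sq) : rtail s -> rtail (fun e => omap (@lflip Q) (s e)).
Proof.
move=> [[M HM]|[N HN]]; [left; exists M => e le; by rewrite HM|].
right; exists N => e le; have [A B] := HN e le; split; first by case: (s e) A.
by move: B; case: (s e); case: (s N) => //= x y [->].
Qed.

Lemma tailed_shift c (s : sq) : tailed s -> tailed (shift c s).
Proof.
case=> R L; split; first exact: rtail_shift.
apply: rtail_ext (rtail_shift (- c) L) => e; rewrite /shift; congr s; lia.
Qed.

Lemma tailed_refl (s : sq) : tailed s -> tailed (refl s).
Proof.
case=> R L; split; first exact: rtail_flip.
apply: rtail_ext (rtail_flip R) => e; by rewrite /refl opprK.
Qed.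

Definition seq_of (w : word Q) : sq := fun e => if in_dom w e then Some (wlet w e) else None.

Lemma in_dom_cv (w : word Q) a b e : a <= e -> e <= b -> in_dom w a -> in_dom w b -> in_dom w e.
Proof.
rewrite /in_dom; case: (wlo w) => [i|]; case: (whi w) => [j|] //=; lia.
Qed.


Lemma seq_ofP (w : word Q) e x : seq_of w e = Some x -> in_dom w e /\ wlet w e = x.
Proof. by rewrite /seq_of; case: ifP => // d [<-]. Qed.

Lemma seq_ofN (w : word Q) e : seq_of w e = None -> ~~ in_dom w e.
Proof. by rewrite /seq_of; case: ifP. Qed.

Lemma seq_ofS (w : word Q) e : in_dom w e -> seq_of w e = Some (wlet w e).
Proof. by rewrite /seq_of => ->. Qed.

Lemma walk_wseq (w : word Q) : is_walk w -> wseq (seq_of w).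
Proof.
case=> [[_ ch] lo hi]; split.
- move=> a b e ae eb; rewrite /seq_of; case: ifP => // da _; case: ifP => // db _.
  by rewrite (in_dom_cv ae eb da db).
- by move=> e x y /seq_ofP [d1 <-] /seq_ofP [d2 <-]; apply: ch.
- move=> e x y /seq_ofP [d1 <-] /seq_ofN d2.
  move: hi d1 d2; rewrite /in_dom; case: (whi w) => [j|] hi; last first.
    by rewrite !andbT; case: (wlo w) => //= i; lia.
  move=> d1 d2; have -> : e = j - 1.
    move: d1 d2; case: (wlo w) => [i|] /=; lia.
  by apply: hi.
- move=> e x y /seq_ofN d1 /seq_ofP [d2 <-].
  move: lo d1 d2; rewrite /in_dom; case: (wlo w) => [i|] lo; last first.
    by case: (whi w) => //= j; lia.
  move=> d1 d2; have -> : e = i.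
    move: d1 d2; case: (whi w) => [j|] /=; lia.
  by apply: lo.
Qed.

Lemma walk_tailed (w : word Q) : is_walk w -> tailed (seq_of w).
Proof.
case=> [_ lo hi]; split.
- move: hi; case E: (whi w) => [j|] hi.
    left; exists j => e je; rewrite /seq_of /in_dom E.
    have -> : (e < j) = false by lia.
    by rewrite andbF.
  case: hi => N [p [_ Hp]]; right.
  exists (if wlo w is Some i then Num.max N (i + 1) else N) => e le.
  have de : forall e, (if wlo w is Some i then Num.max N (i + 1) else N) <= e -> in_dom w e.
    move=> e' le'; rewrite /in_dom E andbT; move: le'; case: (wlo w) => //= i; lia.
  rewrite /odir !seq_ofS ?de //=; split => //; congr Some.
  rewrite (Hp e _).2; last by move: le; case: (wlo w) => [i|] //=; lia.
  rewrite (Hp (if wlo w is Some i then Num.max N (i + 1) else N) _).2 //.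
  by case: (wlo w) => [i|] //=; lia.
- move: lo; case E: (wlo w) => [i|] lo.
    left; exists (- i) => e je; rewrite /seq_of /in_dom E /=.
    by have -> : (i < - e) = false by lia.
  case: lo => N [p [_ Hp]]; right.
  exists (if whi w is Some j then Num.max (- N) (1 - j) else - N) => e le.
  have de : forall e, (if whi w is Some j then Num.max (- N) (1 - j) else - N) <= e -> in_dom w (- e).
    move=> e' le'; rewrite /in_dom E /=; move: le'; case: (whi w) => //= j; lia.
  rewrite /odir !seq_ofS ?de //=; split => //; congr Some.
  rewrite (Hp (- e) _).2; last by move: le; case: (whi w) => [j|] //=; lia.
  rewrite (Hp (- (if whi w is Some j then Num.max (- N) (1 - j) else - N)) _).2 //.
  by case: (whi w) => [j|] //=; lia.
Qed.

Lemma view_eq (w : word Q) q e :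
  view w q e = if (wlet w q).2 then seq_of w (q + e) else refl (seq_of w) (e - q).
Proof.
rewrite /view /refl /seq_of; case: ifP => _ //; rewrite opprB; by case: ifP.
Qed.

Lemma seq_rev (w : word Q) e : seq_of (rev_word w) e = refl (seq_of w) e.
Proof.
rewrite /seq_of /refl.
have -> : in_dom (rev_word w) e = in_dom w (- e).
  rewrite /in_dom /rev_word /=; case: (wlo w) => [i|]; case: (whi w) => [j|] /=;
  apply/idP/idP; lia.
by case: ifP.
Qed.

End Seqs.



Section Beat.
Variable Q : bquiver.
Hypothesis LG : locally_gentle Q.
Notation sq := (sq Q).

Lemma kiss_mk (f g : sq) a b x y z x2 y2 z2 : chain f -> chain g -> a < b ->
  f a = Some x -> g a = Some y -> f (a + 1) = Some z -> g (a + 1) = Some z ->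
  f b = Some x2 -> g b = Some y2 -> f (b - 1) = Some z2 -> g (b - 1) = Some z2 ->
  x.2 = false -> x2.2 = true -> y.2 = true -> y2.2 = false ->
  (forall e, a < e -> e < b -> f e = g e) -> KissA f g.
Proof.
move=> chf chg ab fa ga fa1 ga1 fb gb fb1 gb1 dx dx2 dy dy2 btw.
exists a, b; split; first split => //; rewrite ?fa ?ga ?fb ?gb /isd /odir /= ?dx ?dx2 ?dy ?dy2 //.
split => //; split; congr Some.
- have c1 := chf _ _ _ fa fa1; have c2 := chg _ _ _ ga ga1.
  by move: c1 c2; rewrite /composable => /and4P [/eqP -> _ _ _] /and4P [/eqP -> _ _ _].
- have E : b - 1 + 1 = b by rewrite subrK.
  have c1 := chf _ _ _ fb1 (etrans (f_equal f E) fb).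
  have c2 := chg _ _ _ gb1 (etrans (f_equal g E) gb).
  by move: c1 c2; rewrite /composable => /and4P [/eqP <- _ _ _] /and4P [/eqP <- _ _ _].
Qed.

Lemma div_L (f g : sq) a : wseq f -> wseq g -> a < 0 -> (forall e, a < e -> e <= 0 -> f e = g e) ->
  f 0 <> None -> f a <> g a ->
  exists x y z, [/\ f a = Some x, g a = Some y, f (a + 1) = Some z, g (a + 1) = Some z & x.2 <> y.2].
Proof.
move=> [cvf chf _ eLf] [cvg chg _ eLg] a0 agr f0 fga.
have g0 : g 0 <> None by rewrite -agr.
have : f (a + 1) <> None.
  case Efa : (f a) => [x|].
    by apply: (cvf a 0); rewrite ?Efa //; lia.
  rewrite agr; [|lia|lia]; apply: (cvg a 0) => //; [lia|lia|].
  by case: (g a) fga => //; rewrite Efa.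
case Ez : (f (a + 1)) => [z|] // _.
have Ez' : g (a + 1) = Some z by rewrite -agr //; lia.
case Ex : (f a) => [x|]; case Ey : (g a) => [y|]; rewrite ?Ex ?Ey in fga.
- exists x, y, z; split => // dxy; apply: fga; congr Some.
  by apply: (uniq_pred LG) dxy; [apply: chf Ex Ez | apply: chg Ey Ez'].
- by have := eLg _ x z Ey Ez'; rewrite (chf _ _ _ Ex Ez).
- by have := eLf _ y z Ex Ez; rewrite (chg _ _ _ Ey Ez').
- by [].
Qed.

Lemma div_R (f g : sq) b : wseq f -> wseq g -> 0 < b -> (forall e, 0 <= e -> e < b -> f e = g e) ->
  f 0 <> None -> f b <> g b ->
  exists x y z, [/\ f b = Some x, g b = Some y, f (b - 1) = Some z, g (b - 1) = Some z & x.2 <> y.2].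
Proof.
move=> [cvf chf eRf _] [cvg chg eRg _] b0 agr f0 fgb.
have g0 : g 0 <> None by rewrite -agr.
have E : b - 1 + 1 = b by rewrite subrK.
have : f (b - 1) <> None.
  case Efb : (f b) => [x|].
    by apply: (cvf 0 b); rewrite ?Efb //; lia.
  rewrite agr; [|lia|lia]; apply: (cvg 0 b) => //; [lia|lia|].
  by case: (g b) fgb => //; rewrite Efb.
case Ez : (f (b - 1)) => [z|] // _.
have Ez' : g (b - 1) = Some z by rewrite -agr //; lia.
case Ex : (f b) => [x|]; case Ey : (g b) => [y|]; rewrite ?Ex ?Ey in fgb.
- exists x, y, z; split => // dxy; apply: fgb; congr Some.
  apply: (uniq_succ LG) dxy; [apply: chf Ez _ | apply: chg Ez' _]; by rewrite E.
- by have := eRg _ z x Ez'; rewrite E => /(_ Ey); rewrite (chf _ _ _ Ez (etrans (f_equal f E) Ex)).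
- by have := eRf _ z y Ez; rewrite E => /(_ Ex); rewrite (chg _ _ _ Ez' (etrans (f_equal g E) Ey)).
- by [].
Qed.


Lemma first_L (f g : sq) : f 0 = g 0 -> (forall e, e <= 0 -> f e = g e) \/
  exists a, [/\ a < 0, (forall e, a < e -> e <= 0 -> f e = g e) & f a <> g a].
Proof.
move=> fg0.
case: (classic (exists n : nat, f (- n%:Z) != g (- n%:Z))) => [H|H]; last first.
  left => e e0; case: (eqVneq (f e) (g e)) => // ne; case: H; exists `|e|%N.
  by have -> : - (`|e|%N%:Z) = e by lia.
right; case: (ex_minnP H) => n0 Pn min.
have n00 : (0 < n0)%N by case: n0 Pn {min} => //; rewrite oppr0 fg0 eqxx.
exists (- n0%:Z); split; [lia| |by apply/eqP].
move=> e a b; case: (eqVneq (f e) (g e)) => // ne; exfalso.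
have := min `|e|%N; have -> : - (`|e|%N%:Z) = e by lia.
by move=> /(_ ne); lia.
Qed.

Lemma first_R (f g : sq) : f 0 = g 0 -> (forall e, 0 <= e -> f e = g e) \/
  exists b, [/\ 0 < b, (forall e, 0 <= e -> e < b -> f e = g e) & f b <> g b].
Proof.
move=> fg0.
case: (classic (exists n : nat, f n%:Z != g n%:Z)) => [H|H]; last first.
  left => e e0; case: (eqVneq (f e) (g e)) => // ne; case: H; exists `|e|%N.
  by have -> : (`|e|%N%:Z) = e by lia.
right; case: (ex_minnP H) => n0 Pn min.
have n00 : (0 < n0)%N by case: n0 Pn {min} => //; rewrite fg0 eqxx.
exists n0%:Z; split; [lia| |by apply/eqP].
move=> e a b; case: (eqVneq (f e) (g e)) => // ne; exfalso.
have := min `|e|%N; have -> : (`|e|%N%:Z) = e by lia.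
by move=> /(_ ne); lia.
Qed.


Lemma dir_neg (x y : letter Q) b : x.2 = b -> x.2 <> y.2 -> y.2 = ~~ b.
Proof. by case: b => <-; case: (x.2); case: (y.2). Qed.

Lemma beaten_cross (f g : sq) : wseq f -> wseq g -> ~ KissA f g -> ~ KissA g f ->
  countercurrent_lt f g -> exists L R, [/\ Cross f g L R, ltO L 0 & ltO' 0 R].
Proof.
move=> wf wg nk1 nk2 [[[k [k0 agr ne [x fx]]]|[r [r0 agr ne [x fx]]]] _].
-
  have [fg0 f0] := agr 0 ltac:(lia) (lexx _).
  have [x1 [y1 [z [fa ga fa1 ga1 dxy]]]] := div_L wf wg (a := - k - 1) ltac:(lia)
     (fun e a b => (agr e ltac:(lia) b).1) f0 ne.
  have dx1 : x1.2 = true by move: fa; rewrite fx => -[<-].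
  have dy1 := dir_neg dx1 dxy.
  case: (first_R fg0) => [agR|[b [b0 agB neb]]].
    exists (Some (- k - 1)), None; split => //=; last by lia.
    split => //=.
    + move=> e a _; have [e0|e0] : e <= 0 \/ 0 <= e by lia.
      * by apply: (agr e _ e0).1; lia.
      * by apply: agR.
    + by rewrite fa ga /isd /odir /= dx1 dy1.
    + by case.
  have [x2 [y2 [z2 [fb gb fb1 gb1 dxy2]]]] := div_R wf wg b0 agB f0 neb.
  case dx2 : (x2.2).
    exists (Some (- k - 1)), (Some b); split => //=; last by lia.
    split => //=.
    + move=> e a c; have [e0|e0] : e <= 0 \/ 0 <= e by lia.
      * by apply: (agr e _ e0).1; lia.
      * by apply: agB.
    + by rewrite fa ga /isd /odir /= dx1 dy1.
    + by rewrite fb gb /isd /odir /= dx2 (dir_neg dx2 dxy2).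
    + by case.
  case: nk2; apply: (kiss_mk (a := - k - 1) (b := b)) ga fa ga1 fa1 gb fb gb1 fb1 _ _ _ _ _.
  + by case: wg.
  + by case: wf.
  + lia.
  + exact: dy1.
  + by have := dir_neg dx2 dxy2.
  + exact: dx1.
  + exact: dx2.
  + move=> e a c; have [e0|e0] : e <= 0 \/ 0 <= e by lia.
    * by apply/esym; apply: (agr e _ e0).1; lia.
    * by apply/esym; apply: agB.
-
  have [fg0 f0] := agr 0 (lexx _) ltac:(lia).
  have [x1 [y1 [z [fb gb fb1 gb1 dxy]]]] := div_R wf wg (b := r + 1) ltac:(lia)
     (fun e a b => (agr e a ltac:(lia)).1) f0 ne.
  have dx1 : x1.2 = true by move: fb; rewrite fx => -[<-].
  have dy1 := dir_neg dx1 dxy.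
  case: (first_L fg0) => [agL|[a [a0 agA nea]]].
    exists None, (Some (r + 1)); split => //=; last by lia.
    split => //=.
    + move=> e _ c; have [e0|e0] : e <= 0 \/ 0 <= e by lia.
      * by apply: agL.
      * by apply: (agr e e0 _).1; lia.
    + by rewrite fb gb /isd /odir /= dx1 dy1.
    + by case.
  have [x2 [y2 [z2 [fa ga fa1 ga1 dxy2]]]] := div_L wf wg a0 agA f0 nea.
  case dx2 : (x2.2); last first.
    case: nk1; apply: (kiss_mk (a := a) (b := r + 1)) fa ga fa1 ga1 fb gb fb1 gb1 _ _ _ _ _.
    + by case: wf.
    + by case: wg.
    + lia.
    + exact: dx2.
    + exact: dx1.
    + by have := dir_neg dx2 dxy2.
    + exact: dy1.
    + move=> e c d; have [e0|e0] : e <= 0 \/ 0 <= e by lia.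
      * by apply: agA.
      * by apply: (agr e e0 _).1; lia.
  exists (Some a), (Some (r + 1)); split => //=; last by lia.
  split => //=.
  + move=> e c d; have [e0|e0] : e <= 0 \/ 0 <= e by lia.
    * by apply: agA.
    * by apply: (agr e e0 _).1; lia.
  + by rewrite fa ga /isd /odir /= dx2 (dir_neg dx2 dxy2).
  + by rewrite fb gb /isd /odir /= dx1 dy1.
  + by case.
Qed.

End Beat.



Section Kiss.
Variable Q : bquiver.
Notation sq := (sq Q).

Lemma isd_seq (w : word Q) c e b : isd (seq_of w (c + e)) b ->
  in_dom w (c + e) /\ (wlet w (c + e)).2 = b.
Proof. by case/isdP => x [/seq_ofP [d <-] <-]. Qed.

Lemma kiss_fwd (s t : sq) (mu nu : word Q) c1 c2 :
  (forall e, s e = seq_of mu (c1 + e)) -> (forall e, t e = seq_of nu (c2 + e)) ->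
  KissA s t -> kiss0 mu nu.
Proof.
move=> Es Et [a [b [[ab sa sb ta tb] [btw [vt vs]]]]].
move: sa sb ta tb vt btw; rewrite !Es !Et => /isd_seq [da1 da2] /isd_seq [db1 db2]
  /isd_seq [ea1 ea2] /isd_seq [eb1 eb2].
rewrite !seq_ofS // => /= -[vt] btw.
exists (c1 + a), (c1 + b), (c2 + a), (c2 + b); split.
- by split => //; lia.
- by split => //; lia.
- split; [lia|exact: vt|].
  move=> d d0 d1; have := btw (a + d) ltac:(lia) ltac:(lia).
  rewrite !Es !Et !seq_ofS ?addrA; first by case.
  + by apply: (in_dom_cv (a := c2 + a) (b := c2 + b)) => //; lia.
  + by apply: (in_dom_cv (a := c1 + a) (b := c1 + b)) => //; lia.
Qed.

Lemma KissA_refl (s t : sq) : KissA s t -> KissA (refl s) (refl t).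
Proof.
move=> [a [b [[ab sa sb ta tb] [btw [vt vs]]]]].
exists (- b), (- a); rewrite /refl !opprK; split; first split.
- lia.
- by move: sb; case: (s b) => // x; rewrite /isd /odir /= => /eqP [->].
- by move: sa; case: (s a) => // x; rewrite /isd /odir /= => /eqP [->].
- by move: tb; case: (t b) => // x; rewrite /isd /odir /= => /eqP [->].
- by move: ta; case: (t a) => // x; rewrite /isd /odir /= => /eqP [->].
split.
- by move=> e e1 e2; rewrite btw //; lia.
split.
- move: vs; case: (s b); case: (t b) => //= x y [E]; congr Some.
  by move: E; case: x y => [? []] [? []].
- move: vt; case: (s a); case: (t a) => //= x y [E]; congr Some.
  by move: E; case: x y => [? []] [? []].
Qed.

Lemma reflK (s : sq) e : refl (refl s) e = s e.
Proof. by rewrite /refl opprK; case: (s e) => //= x; rewrite lflipK. Qed.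

Definition fromw (s : sq) (w : word Q) :=
  exists c, (forall e, s e = seq_of w (c + e)) \/ (forall e, s e = refl (seq_of w) (c + e)).

Lemma kissA_kisses (s t : sq) mu nu : fromw s mu -> fromw t nu -> KissA s t -> kisses mu nu.
Proof.
move=> [c1 Hs] [c2 Ht] K.
have Hrev : forall c, (forall e, t e = refl (seq_of nu) (c + e)) ->
    forall e, t e = seq_of (rev_word nu) (c + e).
  by move=> c H e; rewrite H seq_rev.
case: Hs => Hs.
- case: Ht => Ht.
  + by left; apply: kiss_fwd Hs Ht K.
  + by right; apply: kiss_fwd Hs (Hrev _ Ht) K.
- have K' := KissA_refl K.
  have Hs' : forall e, refl s e = seq_of mu (- c1 + e).
    move=> e; rewrite /refl Hs /refl; have -> : - (c1 + - e) = - c1 + e by lia.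
    by case: (seq_of mu _) => //= y; rewrite lflipK.
  case: Ht => Ht.
  + right; apply: (kiss_fwd (c2 := - c2) Hs' _ K') => e.
    rewrite /refl Ht seq_rev /refl; have -> : - (- c2 + e) = c2 - e by lia.
    by [].
  + left; apply: (kiss_fwd (c2 := - c2) Hs' _ K') => e.
    rewrite /refl Ht /refl; have -> : - (c2 + - e) = - c2 + e by lia.
    by case: (seq_of nu _) => //= y; rewrite lflipK.
Qed.

End Kiss.



Section Main.
Variable Q : bquiver.
Notation sq := (sq Q).

Lemma fromw_wseq (g : sq) nu : is_walk nu -> fromw g nu -> wseq g.
Proof.
move=> /walk_wseq W [c [H|H]].
- by apply: wseq_ext (wseq_shift c W) => e; rewrite H.
- by apply: wseq_ext (wseq_shift c (wseq_refl W)) => e; rewrite H.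
Qed.

Lemma fromw_tailed (g : sq) nu : is_walk nu -> fromw g nu -> tailed g.
Proof.
have Te : forall s t : sq, (forall e, s e = t e) -> tailed s -> tailed t.
  move=> s t E [R L]; split; first exact: rtail_ext R.
  by apply: rtail_ext L => e; rewrite E.
move=> /walk_tailed W [c [H|H]].
- by apply: Te (tailed_shift c W) => e; rewrite H.
- by apply: Te (tailed_shift c (tailed_refl W)) => e; rewrite H.
Qed.

Lemma isd_seq0 (w : word Q) x b : isd (seq_of w x) b -> in_dom w x /\ (wlet w x).2 = b.
Proof. by case/isdP => y [/seq_ofP [d <-] <-]. Qed.

Lemma isd_refl (s : sq) e b : isd (refl s e) b = isd (s (- e)) (~~ b).
Proof. by rewrite /refl /isd /odir; case: (s (- e)) => //= x; case: b; case: (x.2). Qed.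

Lemma view_fromw (nu : word Q) q : fromw (view nu q) nu.
Proof.
case E : (wlet nu q).2.
- by exists q; left => e; rewrite view_eq E.
- by exists (- q); right => e; rewrite view_eq E addrC.
Qed.

Lemma fromw_shift (g : sq) nu d : fromw g nu -> fromw (fun e => g (e - d)) nu.
Proof.
case=> c [H|H]; exists (c - d); [left|right] => e; rewrite H; congr (_ _); lia.
Qed.

Lemma Cross_shift (f g h : sq) L R d : Cross f g L R -> (forall e, f e = h (d + e)) ->
  Cross h (fun e => g (e - d)) (omap (fun x => x + d) L) (omap (fun x => x + d) R).
Proof.
move=> [A BL BR nn] E; split.
- move=> e a b; have -> : h e = f (e - d) by rewrite E; congr h; lia.
  by apply: A; [move: a; case: (L) => //= l; lia | move: b; case: (R) => //= r; lia].
- move: BL; case: (L) => //= l; have -> : h (l + d) = f l by rewrite E addrC.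
  by rewrite addrK => ?.
- move: BR; case: (R) => //= r; have -> : h (r + d) = f r by rewrite E addrC.
  by rewrite addrK => ?.
- move: nn; case: (L) => [l|]; case: (R) => [r|] nn [H1 H2]; try discriminate.
  by apply: nn.
Qed.

Lemma bnd_list (h : sq) (F : seq (word Q)) : tailed h -> (exists e, ~~ isd (h e) true) ->
  (forall nu, List.In nu F -> is_walk nu) ->
  (exists M, forall nu, List.In nu F -> forall g, fromw g nu -> forall L r,
      Cross h g L (Some r) -> ltO L 0 -> r < M) /\
  (exists M, forall nu, List.In nu F -> forall g, fromw g nu -> forall l R,
      Cross h g (Some l) R -> ltO' 0 R -> - M < l).
Proof.
move=> th ns; elim: F => [|nu F IH] W.
  by split; exists 0.
have [[M3 H3] [N3 K3]] := IH (fun x i => W x (or_intror i)).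
have Wn := W nu (or_introl erefl).
have t1 := walk_tailed Wn; have t2 := tailed_refl t1.
have [M1 H1] := bound_right th t1 ns; have [M2 H2] := bound_right th t2 ns.
have [N1 K1] := bound_left th t1 ns; have [N2 K2] := bound_left th t2 ns.
split.
- exists (Num.max M1 (Num.max M2 M3)) => x [<-|i] g Hg L r C L0.
  + case: Hg => c [Hc|Hc].
    * have := H1 c L r (Cross_ext Hc C) L0; lia.
    * have := H2 c L r (Cross_ext Hc C) L0; lia.
  + have := H3 x i g Hg L r C L0; lia.
- exists (Num.max N1 (Num.max N2 N3)) => x [<-|i] g Hg l R C R0.
  + case: Hg => c [Hc|Hc].
    * have := K1 c l R (Cross_ext Hc C) R0; lia.
    * have := K2 c l R (Cross_ext Hc C) R0; lia.
  + have := K3 x i g Hg l R C R0; lia.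
Qed.

End Main.

Unset Implicit Arguments.

Theorem lemma5p10 (Q Qbl : bquiver)
    (iv : qvert Q -> qvert Qbl) (ia : qarr Q -> qarr Qbl)
    (F : seq (word Qbl)) (w : word Qbl) (p : int) :
  locally_gentle Q ->
  is_blossoming iv ia ->
  is_nk_face F ->
  List.In w F ->
  in_dom w p ->
  ~ is_inf_straight w ->
  exists q : int,
    [/\ in_dom w q, (wlet w q).2 = (wlet w p).2 & maximal_in_Fbeta F w q].
Proof.
move=> _ [_ _ _ _ [_ _ _ LG]] [FW FK] wF dp nstr.
apply: NNPP => Hn.
pose h := view w p.
pose G := fun g : sq Qbl => exists nu, List.In nu F /\ fromw g nu.
have Gw : forall g, G g -> wseq g by move=> g [nu [i Hg]]; apply: fromw_wseq (FW _ i) Hg.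
have nok : forall s t, G s -> G t -> ~ KissA s t.
  by move=> s t [mu [i Hs]] [nu [j Ht]] K; apply: (FK _ _ i j); apply: kissA_kisses Hs Ht K.
have Gh : G h by exists w; split => //; apply: view_fromw.
have wh : wseq h := Gw _ Gh.
have th : tailed h := fromw_tailed (FW _ wF) (view_fromw w p).
have hall : (forall e, isd (h e) true) -> forall l, in_dom w l /\ (wlet w l).2 = (wlet w p).2.
  move=> H l; rewrite /h in H.
  case Ep : (wlet w p).2.
  - have := H (l - p); rewrite view_eq Ep; have -> : p + (l - p) = l by lia.
    by move/isd_seq0.
  - have := H (p - l); rewrite view_eq Ep isd_refl; have -> : - (p - l - p) = l by lia.
    by move/isd_seq0.
have ns : exists e, ~~ isd (h e) true.
  apply: NNPP => H; apply: nstr.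
  have H' : forall e, isd (h e) true.
    by move=> e; apply: NNPP => ne; apply: H; exists e; apply/negP.
  have A := hall H'.
  split; [|split].
  - case E : (wlo w) => [i|] //; have := (A i).1; rewrite /in_dom E; lia.
  - case E : (whi w) => [j|] //; have := (A j).1; rewrite /in_dom E andbC; lia.
  - by move=> l; rewrite (A l).2 (A 0).2.
have h0 : isd (h 0) true.
  rewrite /h view_eq; case Ep : (wlet w p).2.
  - by rewrite addr0 seq_ofS // /isd /odir /= Ep.
  - rewrite isd_refl; have -> : - (0 - p) = p by lia.
    by rewrite seq_ofS // /isd /odir /= Ep.
have cover : forall d, isd (h d) true ->
    exists g L R, [/\ G g, Cross h g L R, ltO L d & ltO' d R].
  move=> d hd; pose q := if (wlet w p).2 then p + d else p - d.
  have [dq Eq Vq] : [/\ in_dom w q, (wlet w q).2 = (wlet w p).2 & forall e, view w q e = h (d + e)].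
    rewrite /q /h; move: hd; rewrite /h view_eq; case Ep : (wlet w p).2 => /=.
    - move/isd_seq0 => [d1 d2]; split => //.
      by move=> e; rewrite !view_eq d2 Ep addrA.
    - rewrite isd_refl; have -> : - (d - p) = p - d by lia.
      move/isd_seq0 => [d1 d2]; split => //.
      by move=> e; rewrite !view_eq d2 Ep; congr (refl _ _); lia.
  apply: NNPP => Hc; apply: Hn; exists q; split => //.
  move=> nu inu q' dq' arr nsame cc.
  have Gf : G (view w q) by exists w; split => //; apply: view_fromw.
  have Gg : G (view nu q') by exists nu; split => //; apply: view_fromw.
  have [L [R [C L0 R0]]] := beaten_cross LG (Gw _ Gf) (Gw _ Gg) (nok _ _ Gf Gg) (nok _ _ Gg Gf) cc.
  apply: Hc; exists (fun e => view nu q' (e - d)), (omap (fun x => x + d) L), (omap (fun x => x + d) R).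
  split.
  - by exists nu; split => //; apply: fromw_shift; apply: view_fromw.
  - exact: Cross_shift C Vq.
  - by move: L0; case: (L) => //= l; lia.
  - by move: R0; case: (R) => //= r; lia.
have [[M1 H1] [M2 H2]] := bnd_list th ns FW.
apply: (core (G := G) _ nok Gh _ cover _ _ h0).
- by move=> g /Gw [].
- by case: wh.
- by exists M1 => g L r [nu [i Hg]] C L0; apply: H1 i g Hg L r C L0.
- by exists M2 => g l R [nu [i Hg]] C R0; apply: H2 i g Hg l R C R0.
Qed.
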